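(* Let $G$ be a connected finite simple graph of order $n$ with at least one edge and maximum degree $\Delta$. If $\Delta\geq \frac{n-2}{3}$, then $\mathrm{es}_{\Delta}(G)\leq\left\lceil\frac{n}{2}\right\rceil$.
   Context: $\mathrm{es}_{\Delta}(G)$ is the minimum number of edges of $G$ whose removal results in a subgraph with maximum degree $\Delta(G)-1$. *)

(* Defs.v *)
From mathcomp Require Import all_boot.
Set Implicit Arguments. Unset Strict Implicit. Unset Printing Implicit Defensive.

(* A finite simple graph on vertex type T is given by its edge set
   E : {set {set T}}, every edge being a 2-element subset of T. *)
Definition simple_edges (T : finType) (E : {set {set T}}) : bool :=
  [forall f in E, #|f| == 2].

Definition deg (T : finType) (E : {set {set T}}) (v : T) : nat :=
  #|[set f in E | v \in f]|.

Definition maxdeg (T : finType) (E : {set {set T}}) : nat :=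
  \max_(v : T) deg E v.

Definition adj (T : finType) (E : {set {set T}}) : rel T :=
  fun u v => [set u; v] \in E.

Definition connected_graph (T : finType) (E : {set {set T}}) : Prop :=
  forall u v : T, connect (adj E) u v.

(* es_Delta(G): minimum number of edges whose removal gives a subgraph with
   maximum degree Delta(G) - 1.  (Such a set always exists; the default
   #|E|.+1 is never attained when E is nonempty.) *)
Definition es_Delta (T : finType) (E : {set {set T}}) : nat :=
  \big[minn/#|E|.+1]_(F : {set {set T}} | (F \subset E) &&
                          (maxdeg (E :\: F) == (maxdeg E).-1)) #|F|.

(* Main.v *)
Require Import Defs.
From mathcomp Require Import all_boot zify.
Set Implicit Arguments. Unset Strict Implicit. Unset Printing Implicit Defensive.

Section G.
Variables (T : finType) (E : {set {set T}}).
Hypothesis HE : simple_edges E.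

Lemma edge2 f : f \in E -> #|f| = 2.
Proof. by move=> fE; move/forallP: HE => /(_ f); rewrite fE => /eqP. Qed.

Lemma edgeP f : f \in E -> exists x y, x != y /\ f = [set x; y].
Proof. by move=> /edge2 /eqP /cards2P. Qed.

Lemma edge_other f y : f \in E -> y \in f -> exists z, z != y /\ f = [set y; z].
Proof.
move=> /edgeP [a [b [ab ->]]]; rewrite !inE => /orP [] /eqP ->.
  by exists b; split => //; rewrite eq_sym.
by exists a; split => //; rewrite setUC.
Qed.

Lemma adj_sym : symmetric (adj E).
Proof. by move=> u v; rewrite /adj setUC. Qed.

Lemma adj_irr u : ~~ adj E u u.
Proof.
apply/negP; rewrite /adj setUid => /edge2; by rewrite cards1.
Qed.

Lemma card_sep (P : pred {set T}) : #|[set f in E | P f]| = \sum_(f in E) P f.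
Proof.
rewrite -sum1_card big_mkcond /= [RHS]big_mkcond /=.
by apply: eq_bigr => f _; rewrite !inE; case: (f \in E); case: (P f).
Qed.

Definition adjR (C : {set T}) : rel T := fun u v => [&& u \in C, v \in C & adj E u v].

Lemma adjR_sym C : connect_sym (adjR C).
Proof.
apply: sym_connect_sym => u v; rewrite /adjR adj_sym.
by case: (u \in C); case: (v \in C).
Qed.

Definition comp (C : {set T}) := #|[set root (adjR C) x | x in C]|.

Lemma closed_reach (e : rel T) (a : pred T) x y :
  (forall u w, a u -> e u w -> a w) -> connect e x y -> a x -> a y.
Proof.
move=> cl /connectP [p pp ->]; elim: p x pp => //= z p IH x /andP [exz pz] ax.
exact: IH pz (cl _ _ ax exz).
Qed.


Definition dB (B : {set T}) y := \sum_(f in E) ((y \in f) && (f :&: B != set0)).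

Lemma sum_in (A B : {set T}) : \sum_(y in A) (y \in B) = #|A :&: B|.
Proof.
rewrite -sum1_card big_mkcond [RHS]big_mkcond /=.
by apply: eq_bigr => y _; rewrite inE; case: (y \in A); case: (y \in B).
Qed.

Lemma deg_sum v : deg E v = \sum_(f in E) (v \in f).
Proof. by rewrite /deg card_sep. Qed.

Lemma double_count (C : {set T}) :
  \sum_(y in C) dB (~: C) y <= \sum_(v in ~: C) deg E v.
Proof.
rewrite /dB; under [X in _ <= X]eq_bigr do rewrite deg_sum.
rewrite exchange_big [X in _ <= X]exchange_big /=.
apply: leq_sum => f fE.
case: eqP => [e0|nz] /=.
  by rewrite big1 // => y _; rewrite andbF.
under eq_bigr do rewrite andbT.
rewrite !sum_in.
have h1 := cardsID C f.
have h2 : 0 < #|f :&: ~: C| by rewrite card_gt0; apply/eqP; exact: nz.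
have h3 := edge2 fE.
rewrite setDE in h1.
rewrite (setIC C f) (setIC (~: C) f). lia.
Qed.

Definition Kc (C : {set T}) r := [set z in C | root (adjR C) z == r].

Lemma deg_split (C : {set T}) y : y \in C ->
  deg E y <= dB (~: C) y + (#|Kc C (root (adjR C) y)| - 1).
Proof.
move=> yC.
rewrite deg_sum.
have -> : \sum_(f in E) (y \in f) =
   \sum_(f in E) ((y \in f) && (f :&: ~: C != set0)) +
   \sum_(f in E) ((y \in f) && (f :&: ~: C == set0)).
  rewrite -big_split /=; apply: eq_bigr => f _.
  by case: (y \in f); case: (f :&: ~: C == set0).
rewrite leq_add2l -card_sep.
set K := Kc C _.
have yK : y \in K by rewrite !inE yC eqxx.
rewrite (cardsD1 y K) yK add1n subn1 /=.
apply: leq_trans (leq_imset_card (fun z => [set y; z]) (K :\ y)).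
apply: subset_leq_card; apply/subsetP => f; rewrite inE => /andP [fE /andP [yf f0]].
have [z [zy fz]] := edge_other fE yf.
have zC : z \in C.
  apply: contraT => zC; move/eqP: f0 => /setP /(_ z).
  by rewrite !inE fz !inE eqxx orbT zC.
have con : connect (adjR C) y z.
  by apply: connect1; rewrite /adjR yC zC /adj -fz fE.
apply/imsetP; exists z => //.
rewrite !inE zy zC /=; apply/eqP; symmetry; exact/(rootP (adjR_sym C)).
Qed.


Lemma sum0P (A : {set {set T}}) (F : {set T} -> nat) :
  \sum_(f in A) F f = 0 -> forall f, f \in A -> F f = 0.
Proof.
move=> /eqP; rewrite sum_nat_eq0 => /forallP H f fA.
by move: (H f); rewrite fA => /eqP.
Qed.

Lemma sum0Pt (A : {set T}) (F : T -> nat) :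
  \sum_(f in A) F f = 0 -> forall f, f \in A -> F f = 0.
Proof.
move=> /eqP; rewrite sum_nat_eq0 => /forallP H f fA.
by move: (H f); rewrite fA => /eqP.
Qed.

Lemma reach_B (C : {set T}) y0 : connected_graph E -> y0 \in C -> ~: C != set0 ->
  0 < \sum_(y in Kc C (root (adjR C) y0)) dB (~: C) y.
Proof.
move=> Hconn y0C /set0Pn [v vB].
rewrite lt0n; apply/negP => /eqP s0.
have H0 := sum0Pt s0.
set K := Kc C _ in H0.
have y0K : y0 \in K by rewrite !inE y0C eqxx.
have : v \in K.
  apply: (closed_reach (a := mem K) (e := adj E)) (Hconn y0 v) y0K.
  move=> u w; rewrite /= => uK uw.
  have := sum0P (H0 u uK) uw; rewrite set21 /= => hB0.
  have hB : [set u; w] :&: ~: C == set0 by case: eqP hB0.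
  move: {hB0}hB => /eqP hB.
  have wC : w \in C.
    apply: contraT => wC; move: hB => /setP /(_ w).
    by rewrite !inE eqxx orbT wC.
  move: uK; rewrite !inE => /andP [uC /eqP ru].
  rewrite wC /= -ru; apply/eqP; symmetry; apply/(rootP (adjR_sym C)).
  by apply: connect1; rewrite /adjR uC wC.
by rewrite !inE => /andP [vC _]; move: vB; rewrite inE vC.
Qed.


Lemma comp_bound (D : nat) (C : {set T}) : connected_graph E -> 0 < D ->
  #|T| <= 3 * D + 2 -> (forall v, deg E v <= D) ->
  (forall v, v \in C -> deg E v = D) -> comp C <= #|~: C| + 1.
Proof.
move=> Hconn D0 Hn Hle Heq.
rewrite /comp; set R := [set root (adjR C) x | x in C].
have [B0|Bn] := eqVneq (~: C) set0.
  have CT : C = setT by rewrite -(setCK C) B0 setC0.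
  case: (set_0Vmem R) => [->|[r rR]]; first by rewrite cards0.
  have : R \subset [set r].
    apply/subsetP => r' /imsetP [x xC ->]; move: rR => /imsetP [y yC ->].
    rewrite inE; apply/eqP/(rootP (adjR_sym C)).
    have := Hconn x y; rewrite (@eq_connect _ (adjR C) (adj E)) //.
    by move=> a b; rewrite /adjR CT !inE.
  by move/subset_leq_card; rewrite cards1; lia.
set B := ~: C in Bn *.
have part : forall F : T -> nat,
    \sum_(y in C) F y = \sum_(r in R) \sum_(y in Kc C r) F y.
  move=> F; rewrite (partition_big (root (adjR C)) (mem R)) /=.
    by apply: eq_bigr => r _; apply: eq_bigl => y; rewrite !inE.
  by move=> y yC; apply: imset_f.
set s := fun r => \sum_(y in Kc C r) dB B y.
set k := fun r => #|Kc C r|.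
have sumS : \sum_(r in R) s r <= #|B| * D.
  rewrite -part; apply: leq_trans (double_count C) _.
  rewrite -sum_nat_const; apply: leq_sum => v _; exact: Hle.
have sumK : \sum_(r in R) k r = #|C|.
  by rewrite -sum1_card part; apply: eq_bigr => r _; rewrite sum1_card.
have hn : #|C| + #|B| = #|T| := cardsC C.
have small : forall r, r \in R -> k r <= D -> D <= s r.
  move=> r /imsetP [y0 y0C ->].
  have k1 : 0 < k (root (adjR C) y0).
    by rewrite /k card_gt0; apply/set0Pn; exists y0; rewrite !inE y0C eqxx.
  have : \sum_(y in Kc C (root (adjR C) y0)) (D - (k (root (adjR C) y0) - 1))
           <= s (root (adjR C) y0).
    apply: leq_sum => y; rewrite inE => /andP [yC /eqP ry].
    have := deg_split yC; rewrite Heq // ry /k. rewrite -/B. lia.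
  rewrite sum_nat_const -/(k _) => h1 h2.
  nia.
have pos : forall r, r \in R -> 0 < s r.
  by move=> r /imsetP [y0 y0C ->]; apply: reach_B.
pose P := fun r => D < k r.
have e1 : \sum_(r in R) s r = \sum_(r in R | P r) s r + \sum_(r in R | ~~ P r) s r.
  exact: bigID.
have l1 : \sum_(r in R | P r) 1 <= \sum_(r in R | P r) s r.
  by apply: leq_sum => r /andP [rR _]; apply: pos.
have l2 : \sum_(r in R | ~~ P r) D <= \sum_(r in R | ~~ P r) s r.
  by apply: leq_sum => r /andP [rR nP]; apply: small => //; rewrite leqNgt.
have l3 : \sum_(r in R | P r) D.+1 <= \sum_(r in R) k r.
  rewrite [X in _ <= X](bigID P) /=; apply: (leq_trans _ (leq_addr _ _)).
  by apply: leq_sum => r /andP [_ pr].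
have cR : #|R| = \sum_(r in R | P r) 1 + \sum_(r in R | ~~ P r) 1.
  by rewrite -sum1_card (bigID P).
rewrite !sum_nat_cond_const in l1 l2 l3 cR.
move: l1 l2 l3 cR.
set g := #|[set r | _ & P r]|.
set sm := #|[set r | _ & ~~ P r]|.
move=> l1 l2 l3 cR.
have b1 : 0 < #|B| by rewrite card_gt0.
have g2 : g <= 2 by nia.
have : sm * D + g <= #|B| * D by lia.
case: g l1 l3 cR g2 => [|g'] l1 l3 cR g2 h.
  have : sm <= #|B| by rewrite -(leq_pmul2r D0); lia.
  lia.
have : sm < #|B| by rewrite -(ltn_pmul2r D0); lia.
lia.
Qed.


Definition matching (A : {set T}) (M : {set {set T}}) : bool :=
  [&& M \subset E, [forall f in M, f \subset A] & trivIset M].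
Definition nu A := \max_(M | matching A M) #|M|.
Definition maxm A M := matching A M && (#|M| == nu A).

Lemma matching0 A : matching A set0.
Proof.
rewrite /matching sub0set /=; apply/andP; split.
  by apply/forallP => f; rewrite inE.
by apply/trivIsetP => f g; rewrite inE.
Qed.

Lemma nu_ge A M : matching A M -> #|M| <= nu A.
Proof. by move=> mM; rewrite /nu; apply: (@leq_bigmax_cond _ (fun M => matching A M) (fun M => #|M|)). Qed.

Lemma nu_ex A : exists M, maxm A M.
Proof.
have : 0 < #|[pred M | matching A M]|.
  by apply/card_gt0P; exists set0; rewrite inE matching0.
move=> /(eq_bigmax_cond (fun M : {set {set T}} => #|M|)) [M mM eM].
by exists M; rewrite /maxm /nu eM eqxx andbT; move: mM; rewrite inE.
Qed.

Lemma matching_sub A M : matching A M -> M \subset E.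
Proof. by case/and3P. Qed.

Lemma matching_in A M f : matching A M -> f \in M -> f \subset A.
Proof. by case/and3P => _ /forallP H _ fM; move: (H f); rewrite fM. Qed.

Lemma matching_disj A M f g x : matching A M -> f \in M -> g \in M ->
  x \in f -> x \in g -> f = g.
Proof.
case/and3P => _ _ /trivIsetP tM fM gM xf xg.
apply/eqP; apply: contraT => fg; have := tM f g fM gM fg.
by move/disjoint_setI0/setP/(_ x); rewrite !inE xf xg.
Qed.

Lemma cover_sub A M : matching A M -> cover M \subset A.
Proof.
move=> mM; apply/subsetP => x /bigcupP [f fM xf].
exact: (subsetP (matching_in mM fM)).
Qed.

Lemma cover_card A M : matching A M -> #|cover M| = 2 * #|M|.
Proof.
move=> mM; case/and3P: (mM) => sME _ /eqP <-.
rewrite mulnC -sum_nat_const; apply: eq_bigr => f fM.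
by apply: edge2; apply: (subsetP sME).
Qed.

Lemma matching_mono (A A2 : {set T}) M : A \subset A2 -> matching A M -> matching A2 M.
Proof.
move=> AA2 /and3P [s1 /forallP s2 s3]; rewrite /matching s1 s3 andbT /=.
apply/forallP => f; apply/implyP => fM; move: (s2 f); rewrite fM /= => fA.
exact: subset_trans fA AA2.
Qed.

Lemma matching_add (A : {set T}) (N N' : {set {set T}}) e : matching A N -> N' \subset N -> e \in E ->
  e \subset A -> [disjoint e & cover N'] -> matching A (e |: N').
Proof.
move=> mN NN eE eA dis.
have mN' : trivIset N' by apply: trivIsetS NN _; case/and3P: mN.
rewrite /matching; apply/and3P; split.
- apply/subsetP => f; rewrite in_setU1 => /orP [/eqP ->|fN] //.
  exact: (subsetP (matching_sub mN)) (subsetP NN _ fN).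
- apply/forallP => f; apply/implyP; rewrite in_setU1 => /orP [/eqP ->|fN] //.
  exact: matching_in mN (subsetP NN _ fN).
- have [] := @trivIsetU1 _ e N' _ mN'; last by [].
  + move=> B BN; apply: disjointWr dis.
    by apply/subsetP => x xB; apply/bigcupP; exists B.
  + apply/negP => /(subsetP NN) /(subsetP (matching_sub mN)) /edge2.
    by rewrite cards0.
Qed.

Lemma aug_max (A : {set T}) M u w : maxm A M -> u \in A -> w \in A -> adj E u w ->
  u \notin cover M -> w \notin cover M -> False.
Proof.
move=> /andP [mM /eqP cM] uA wA uw uM wM.
have eE : [set u; w] \in E := uw.
have mM' : matching A ([set u; w] |: M).
  apply: matching_add mM (subxx _) eE _ _.
    by apply/subsetP => x; rewrite !inE => /orP [] /eqP ->.
  rewrite disjoint_subset; apply/subsetP => x; rewrite !inE => /orP [] /eqP -> //.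
have := nu_ge mM'; rewrite cardsU1 -cM.
have -> : [set u; w] \notin M.
  by apply/negP => eM; move: uM => /negP; apply; apply/bigcupP; exists [set u; w]; rewrite // !inE eqxx.
by rewrite add1n ltnn.
Qed.


Lemma missed_card A M : maxm A M -> #|A :\: cover M| = #|A| - 2 * nu A.
Proof.
move=> /andP [mM /eqP cM].
by rewrite cardsD (setIidPr (cover_sub mM)) (cover_card mM) cM.
Qed.

Lemma in_cover (M : {set {set T}}) x f : f \in M -> x \in f -> x \in cover M.
Proof. by move=> fM xf; apply/bigcupP; exists f. Qed.

Lemma path_last_in (A : {set T}) t p : t \in A -> path (adjR A) t p -> last t p \in A.
Proof.
elim: p t => //= a p IH t tA /andP [/and3P [_ aA _] pp]; exact: IH.
Qed.

Lemma gallai (A : {set T})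
  (Hess : forall v, v \in A -> exists M, maxm A M /\ v \notin cover M) :
  forall n (p : seq T) M u, size p <= n -> maxm A M -> u \in A ->
  u \notin cover M -> path (adjR A) u p -> last u p \notin cover M ->
  u = last u p.
Proof.
elim=> [|n IH] [|t p] M u //= sz mM uA uM.
move=> /andP [/and3P [_ tA ut] pp] vM.
set v := last t p in vM *.
have [uv|uv] := eqVneq u v; first by [].
exfalso.
have tM : t \in cover M.
  by apply/negPn/negP => tM; exact: aug_max mM uA tA ut uM tM.
have [N0 [mN0 tN0]] := Hess t tA.
pose PN := fun N => maxm A N && (t \notin cover N).
have PN0 : PN N0 by rewrite /PN mN0 tN0.
case: (@arg_maxnP _ N0 PN (fun N => #|N :&: M|) PN0) => N /andP [mN tN] Nmax.
have uN : u \in cover N.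
  by apply/negPn/negP => uN; apply: (aug_max mN tA uA _ tN uN); rewrite adj_sym.
have vN : v \in cover N.
  apply/negPn/negP => vN.
  have := IH p N t sz mN tA tN pp vN; rewrite -/v => tv.
  by move: vM; rewrite -tv tM.
have cM := missed_card mM.
have cN := missed_card mN.
have [x [xA xN xt xM]] : exists x, [/\ x \in A, x \notin cover N, x != t & x \in cover M].
  case: (boolP [exists x, [&& x \in A, x \notin cover N, x != t & x \in cover M]]).
    by move=> /existsP [x /and4P [? ? ? ?]]; exists x.
  rewrite negb_exists => /forallP H.
  have sub : (A :\: cover N) :\ t \subset (A :\: cover M) :\: [set u; v].
    apply/subsetP => z; rewrite !inE => /andP [zt /andP [zN zA]].
    have := H z; rewrite zA zN zt /= => zM.
    rewrite zM /= andbT; apply/norP; split; apply/eqP => ez.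
      by move: zN; rewrite ez uN.
    by move: zN; rewrite ez vN.
  have := subset_leq_card sub.
  have tNN : t \in A :\: cover N by rewrite inE tN tA.
  rewrite (cardsD1 t (A :\: cover N)) tNN in cN.
  have uvs : [set u; v] \subset A :\: cover M.
    apply/subsetP => z; rewrite !inE => /orP [] /eqP -> //; first by rewrite uM uA.
    by rewrite vM /=; apply: path_last_in pp.
  rewrite (cardsD (A :\: cover M) [set u; v]) (setIidPr uvs) cards2 uv /= => h.
  exfalso; have h2 := subset_leq_card uvs; rewrite cards2 uv /= in h2.
  move: cN; rewrite /= => cN.
  clear -h h2 cN cM; lia.
have [f fM xf] : exists2 f, f \in M & x \in f by apply/bigcupP.
have [mM0 _] := andP mM.
have [mNm /eqP cardN] := andP mN.
have fE : f \in E := subsetP (matching_sub mM0) f fM.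
have fA : f \subset A := matching_in mM0 fM.
have [y [yx fxy]] := edge_other fE xf.
have yA : y \in A by apply: (subsetP fA); rewrite fxy !inE eqxx orbT.
have yN : y \in cover N.
  apply/negPn/negP => yN; apply: (aug_max mN xA yA _ xN yN).
  by rewrite /adj -fxy.
have [g gN yg] : exists2 g, g \in N & y \in g by apply/bigcupP.
have fN : f \notin N by apply/negP => fN; move: xN; rewrite (in_cover fN xf).
have dis : [disjoint f & cover (N :\ g)].
  rewrite disjoint_subset; apply/subsetP => z; rewrite fxy !inE => /orP [] /eqP ->.
    apply/negP => /bigcupP [h]; rewrite inE => /andP [_ hN] xh.
    by move: xN; rewrite (in_cover hN xh).
  apply/negP => /bigcupP [h]; rewrite inE => /andP [hg hN] yh.
  by move: hg; rewrite (matching_disj mNm hN gN yh yg) inE eqxx.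
have mN' : matching A (f |: (N :\ g)).
  exact: matching_add mNm (subD1set N g) fE fA dis.
have fNg : f \notin N :\ g by rewrite !inE (negbTE fN) andbF.
have cN' : #|f |: (N :\ g)| = #|N|.
  by rewrite cardsU1 fNg (cardsD1 g N) gN.
have PN' : PN (f |: (N :\ g)).
  rewrite /PN /maxm mN' cN' cardN eqxx /=.
  apply/negP => /bigcupP [h]; rewrite in_setU1 => /orP [/eqP ->|]; rewrite ?fxy ?inE.
    move=> /orP [] /eqP et; first by move: xt; rewrite et eqxx.
    by move: tN; rewrite et yN.
  move=> /andP [_ hN] th; by move: tN; rewrite (in_cover hN th).
have gM : g \notin M.
  apply/negP => gM; have := matching_disj mM0 gM fM yg.
  rewrite fxy !inE eqxx orbT => /(_ isT) eg.
  have : x \in cover N by apply: (in_cover gN); rewrite eg !inE eqxx.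
  by rewrite (negbTE xN).
have sub : f |: (N :&: M) \subset (f |: (N :\ g)) :&: M.
  apply/subsetP => h; rewrite !inE => /orP [/eqP ->|/andP [hN hM]].
    by rewrite eqxx fM.
  rewrite hN hM !andbT orbC; apply/orP; left; apply/negP => /eqP hg.
  by move: gM; rewrite -hg hM.
have := subset_leq_card sub; rewrite cardsU1 inE (negbTE fN) /=.
have := Nmax _ PN'; rewrite /geq => h1 h2.
by move: (leq_trans h2 h1); rewrite add1n ltnn.
Qed.


Lemma TBw n (A : {set T}) : #|A| <= n ->
  exists X : {set T}, X \subset A /\ #|A| + #|X| <= 2 * nu A + comp (A :\: X).
Proof.
elim: n A => [|n IH] A hA.
  by exists set0; rewrite sub0set cards0; split => //; move: hA; rewrite leqn0 => /eqP ->.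
case: (boolP [exists v, (v \in A) && [forall M, maxm A M ==> (v \in cover M)]]).
  move=> /existsP [v /andP [vA /forallP Hv]].
  set A' := A :\ v.
  have cA : #|A| = 1 + #|A'| by rewrite (cardsD1 v A) vA.
  have hA' : #|A'| <= n by lia.
  have [X' [XA' hX']] := IH A' hA'.
  have vA' : v \notin A' by rewrite !inE eqxx.
  have nuA : nu A' < nu A.
    have [M' mM'] := nu_ex A'.
    have [mM'0 /eqP cM'] := andP mM'.
    have mMA : matching A M' := matching_mono (subD1set A v) mM'0.
    have le := nu_ge mMA.
    rewrite ltnNge; apply/negP => hge.
    have : maxm A M' by rewrite /maxm mMA eqn_leq le cM' hge.
    move=> /(implyP (Hv M')) vM.
    by move: vA'; rewrite (subsetP (cover_sub mM'0) v vM).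
  exists (v |: X'); split.
    apply/subsetP => z; rewrite !inE => /orP [/eqP ->|zX] //.
    by move: (subsetP XA' z zX); rewrite !inE => /andP [].
  have -> : A :\: (v |: X') = A' :\: X'.
    by apply/setP => z; rewrite !inE; case: (z == v); case: (z \in X'); case: (z \in A).
  have vX' : v \notin X' by apply/negP => /(subsetP XA'); rewrite (negbTE vA').
  rewrite cardsU1 vX' cA.
  lia.
rewrite negb_exists => /forallP H.
have Hess : forall v, v \in A -> exists M, maxm A M /\ v \notin cover M.
  move=> v vA; move: (H v); rewrite vA /= negb_forall => /existsP [M].
  by rewrite negb_imply => /andP [mM vM]; exists M.
exists set0; rewrite sub0set setD0 cards0 addn0; split => //.
have [M mM] := nu_ex A.
have [mM0 /eqP cM] := andP mM.
have h1 : #|A :\: cover M| = #|A| - 2 * nu A := missed_card mM.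
have h2 : 2 * nu A <= #|A|.
  by rewrite -cM -(cover_card mM0); apply: subset_leq_card (cover_sub mM0).
have h3 : #|A :\: cover M| <= comp A.
  rewrite /comp -(@card_in_imset _ _ (root (adjR A)) (A :\: cover M)).
    by apply: subset_leq_card; apply: imsetS; apply: subsetDl.
  move=> u w; rewrite !inE => /andP [uM uA] /andP [wM wA] ruw.
  have /connectP [p pp ew] : connect (adjR A) u w by apply/(rootP (adjR_sym A)).
  rewrite ew; apply: (gallai Hess (leqnn (size p)) mM uA uM pp).
  by rewrite -ew.
lia.
Qed.

End G.

Lemma bigmin_le_seq (I : eqType) (s : seq I) (P : pred I) (F : I -> nat) m j :
  j \in s -> P j -> \big[minn/m]_(i <- s | P i) F i <= F j.
Proof.
elim: s => // a s IH; rewrite inE big_cons => /orP [/eqP <-| js] Pj.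
  by rewrite Pj geq_minl.
case: (P a); last exact: IH.
exact: leq_trans (geq_minr _ _) (IH js Pj).
Qed.

Lemma bigmin_le (I : finType) (P : pred I) (F : I -> nat) m j :
  P j -> \big[minn/m]_(i | P i) F i <= F j.
Proof. by apply: bigmin_le_seq; rewrite mem_index_enum. Qed.

Unset Implicit Arguments.
Set Strict Implicit.

Theorem theorem5p5 (T : finType) (E : {set {set T}}) :
  simple_edges E ->
  connected_graph E ->
  E != set0 ->
  3 * maxdeg E + 2 >= #|T| ->
  es_Delta E <= (#|T| + 1) %/ 2.
Proof.
move=> HE Hconn E0 Hn.
set D := maxdeg E in Hn *.
have Hle : forall v, deg E v <= D by move=> v; apply: leq_bigmax.
have [f0 f0E] := set0Pn _ E0.
have [x0 x0f] : exists x, x \in f0.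
  by apply/set0Pn; rewrite -card_gt0 (edge2 HE f0E).
have D0 : 0 < D.
  apply: leq_trans (Hle x0); rewrite /deg card_gt0; apply/set0Pn; exists f0.
  by rewrite inE f0E x0f.
set S := [set v | deg E v == D].
have Heq : forall v, v \in S -> deg E v = D by move=> v; rewrite inE => /eqP.
have [X [XS hX]] := TBw HE (leqnn #|S|).
have cb := @comp_bound _ _ HE D (S :\: X) Hconn D0 Hn Hle
  (fun v vS => Heq v (subsetP (subsetDl S X) v vS)).
have cSX : #|S :\: X| = #|S| - #|X| by rewrite cardsD (setIidPr XS).
have cXS : #|X| <= #|S| := subset_leq_card XS.
have cC := cardsC (S :\: X).
have hS : #|S| <= 2 * nu E S + (#|T| + 1) - #|S| by lia.
have [M mM] := nu_ex E S.
have [mM0 /eqP cM] := andP mM.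
have hmiss := missed_card HE mM.
have h2 : 2 * nu E S <= #|S|.
  by rewrite -cM -(cover_card HE mM0); apply: subset_leq_card (cover_sub mM0).
pose ef u := odflt set0 [pick f in E | u \in f].
have efP : forall u, u \in S -> ef u \in E /\ u \in ef u.
  move=> u uS; rewrite /ef; case: pickP => [f /andP [fE uf] //|none].
  exfalso; have := Heq u uS; rewrite /deg.
  have -> : [set f in E | u \in f] = set0.
    by apply/setP => f; rewrite !inE; have := none f; rewrite /= => ->.
  by rewrite cards0 => D0'; move: D0; rewrite -D0'.
pose cov (F : {set {set T}}) := (F \subset E) && [forall v in S, exists f in F, v \in f].
pose F0 := M :|: [set ef u | u in S :\: cover M].
have covF0 : cov F0.
  apply/andP; split.
    apply/subsetP => f; rewrite inE => /orP [fM|/imsetP [u]].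
      exact: (subsetP (matching_sub mM0)).
    by rewrite inE => /andP [_ uS] ->; case: (efP u uS).
  apply/forallP => v; apply/implyP => vS; apply/existsP.
  case: (boolP (v \in cover M)) => [/bigcupP [f fM vf]|vM].
    by exists f; rewrite inE fM.
  exists (ef v); rewrite inE; apply/andP; split; last by case: (efP v vS).
  by apply/orP; right; apply: imset_f; rewrite inE vM.
have cF0 : #|F0| <= #|S| - nu E S.
  apply: leq_trans (leq_card_setU _ _) _.
  have := leq_imset_card ef (S :\: cover M).
  rewrite hmiss cM => h; apply: leq_trans (leq_add (leqnn _) h) _; lia.
case: (@arg_minnP _ F0 cov (fun F => #|F|) covF0) => F1 covF1 F1min.
have F1F0 : #|F1| <= #|F0| := F1min F0 covF0.
have [F1E /forallP F1cov] := andP covF1.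
have covv : forall v, v \in S -> exists2 f, f \in F1 & v \in f.
  by move=> v vS; move: (F1cov v); rewrite vS /= => /existsP [f /andP [? ?]]; exists f.
have degsub : forall v, deg (E :\: F1) v <= deg E v.
  move=> v; apply: subset_leq_card; apply/subsetP => f; rewrite !inE.
  by case/andP => /andP [_ ->] ->.
have up : forall v, deg (E :\: F1) v <= D.-1.
  move=> v; case: (boolP (v \in S)) => vS.
    have [f fF vf] := covv v vS.
    have fE : f \in E := subsetP F1E f fF.
    have : [set g in E :\: F1 | v \in g] \subset [set g in E | v \in g] :\ f.
      apply/subsetP => g; rewrite !inE => /andP [/andP [gF gE] vg].
      rewrite gE vg !andbT; apply/eqP => gf; by move: gF; rewrite gf fF.
    move/subset_leq_card => h.
    have := cardsD1 f [set g in E | v \in g]; rewrite inE fE vf /= -/(deg E v) (Heq v vS) => e.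
    by rewrite /deg; apply: (leq_trans h); rewrite e.
  apply: leq_trans (degsub v) _.
  have := Hle v; move: vS; rewrite inE; lia.
have [v0 v0S] : exists v, v \in S.
  have := @eq_bigmax T (fun v => deg E v).
  case; first by apply/card_gt0P; exists x0.
  by move=> v hv; exists v; rewrite inE -hv.
have [f1 f1F _] := covv v0 v0S.
have : ~~ cov (F1 :\ f1).
  apply/negP => cv; have := F1min _ cv.
  by rewrite (cardsD1 f1 F1) f1F add1n ltnn.
rewrite /cov (subset_trans (subsetDl _ _) F1E) /= negb_forall => /existsP [v].
rewrite negb_imply negb_exists => /andP [vS /forallP nv].
have [g gF vg] := covv v vS.
have gf : g = f1.
  apply/eqP; apply: contraT => gf; move: (nv g); by rewrite !inE gf gF vg.
have low : D.-1 <= deg (E :\: F1) v.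
  have fE : f1 \in E := subsetP F1E f1 f1F.
  have : [set h in E | v \in h] :\ f1 \subset [set h in E :\: F1 | v \in h].
    apply/subsetP => h; rewrite !inE => /andP [hf /andP [hE vh]].
    rewrite hE vh !andbT; apply/negP => hF; move: (nv h); by rewrite !inE hf hF vh.
  move/subset_leq_card => h.
  have := cardsD1 f1 [set h in E | v \in h]; rewrite inE fE -gf vg /= gf -/(deg E v) (Heq v vS) => e.
  by rewrite /deg; apply: leq_trans h; rewrite e.
have mdeg : maxdeg (E :\: F1) == D.-1.
  rewrite eqn_leq; apply/andP; split.
    by apply/bigmax_leqP => w _; apply: up.
  apply: leq_trans low _; rewrite /maxdeg.
  exact: leq_bigmax.
rewrite /es_Delta; apply: leq_trans (@bigmin_le _ _ (fun F : {set {set T}} => #|F|) _ F1 _) _.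
  by rewrite F1E mdeg.
rewrite leq_divRL //.
apply: (leq_trans (leq_mul (leq_trans F1F0 cF0) (leqnn 2))).
have eC := cardsC S. rewrite -eC in hS *. clear -hS h2. lia.
Qed.
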